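(* Let $q_0>0$ and $\theta_+\in(0,\pi)$. Then $$q(x,t)=\frac{q_0e^{2iq_0^2t}\big[e^{i\theta_+}e^{2q_0x\sin\theta_+}+e^{-i\theta_+}e^{2q_0^2t\sin(2\theta_+)}\big]}{e^{2q_0x\sin\theta_+}+e^{2q_0^2t\sin(2\theta_+)}}$$ is a smooth solution on $\mathbb{R}^2$ of the nonlocal reverse space-time NLS equation $iq_t(x,t)=q_{xx}(x,t)-2q^2(x,t)q(-x,-t)$, and $q(x,t)\to q_0e^{i(2q_0^2t\pm\theta_+)}$ as $x\to\pm\infty$. *)

(* Defs.v *)
From Stdlib Require Import Reals List.
Open Scope R_scope.

Record Cx := mkC { Re : R; Im : R }.

Definition RtoC (a : R) : Cx := mkC a 0.
Definition Ci : Cx := mkC 0 1.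
Definition Cadd (z w : Cx) : Cx := mkC (Re z + Re w) (Im z + Im w).
Definition Csub (z w : Cx) : Cx := mkC (Re z - Re w) (Im z - Im w).
Definition Cmul (z w : Cx) : Cx :=
  mkC (Re z * Re w - Im z * Im w) (Re z * Im w + Im z * Re w).
Definition Cinv (z : Cx) : Cx :=
  mkC (Re z / (Re z ^ 2 + Im z ^ 2)) (- Im z / (Re z ^ 2 + Im z ^ 2)).
Definition Cdiv (z w : Cx) : Cx := Cmul z (Cinv w).
Definition Cexp (z : Cx) : Cx := mkC (exp (Re z) * cos (Im z)) (exp (Re z) * sin (Im z)).
Definition Cmod (z : Cx) : R := sqrt (Re z ^ 2 + Im z ^ 2).

Definition qsol (q0 th : R) (x t : R) : Cx :=
  Cdiv
    (Cmul (RtoC q0)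
       (Cmul (Cexp (mkC 0 (2 * q0 ^ 2 * t)))
          (Cadd (Cmul (Cexp (mkC 0 th)) (RtoC (exp (2 * q0 * x * sin th))))
                (Cmul (Cexp (mkC 0 (- th))) (RtoC (exp (2 * q0 ^ 2 * t * sin (2 * th))))))))
    (RtoC (exp (2 * q0 * x * sin th) + exp (2 * q0 ^ 2 * t * sin (2 * th)))).

Definition cont2 (g : R -> R -> R) : Prop :=
  forall x t eps, 0 < eps -> exists d, 0 < d /\
    forall y s, Rabs (y - x) < d -> Rabs (s - t) < d -> Rabs (g y s - g x t) < eps.

(* iter_partials l f : f is continuous and the iterated partial derivatives
   in the directions listed in l (true = d/dx, false = d/dt) exist everywhere
   and are (jointly) continuous. *)
Fixpoint iter_partials (l : list bool) (f : R -> R -> R) : Prop :=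
  cont2 f /\
  match l with
  | nil => True
  | d :: l' => exists g : R -> R -> R,
      (forall x t, if d then derivable_pt_lim (fun y => f y t) x (g x t)
                        else derivable_pt_lim (fun s => f x s) t (g x t))
      /\ iter_partials l' g
  end.

Definition smooth2 (f : R -> R -> R) : Prop := forall l, iter_partials l f.
Definition Csmooth2 (f : R -> R -> Cx) : Prop :=
  smooth2 (fun x t => Re (f x t)) /\ smooth2 (fun x t => Im (f x t)).

Definition Cpartial_x (f g : R -> R -> Cx) : Prop :=
  forall x t, derivable_pt_lim (fun y => Re (f y t)) x (Re (g x t)) /\
              derivable_pt_lim (fun y => Im (f y t)) x (Im (g x t)).
Definition Cpartial_t (f g : R -> R -> Cx) : Prop :=
  forall x t, derivable_pt_lim (fun s => Re (f x s)) t (Re (g x t)) /\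
              derivable_pt_lim (fun s => Im (f x s)) t (Im (g x t)).

Definition Clim_pinf (f : R -> Cx) (L : Cx) : Prop :=
  forall eps, 0 < eps -> exists M, forall x, M < x -> Cmod (Csub (f x) L) < eps.
Definition Clim_minf (f : R -> Cx) (L : Cx) : Prop :=
  forall eps, 0 < eps -> exists M, forall x, x < M -> Cmod (Csub (f x) L) < eps.

(* Main.v *)
From Pilot Require Import Defs.
From Coquelicot Require Import Coquelicot.
From Stdlib Require Import Reals Lra.
Import Pilot.Defs.
Open Scope R_scope.

Definition Cont (f : R -> R -> R) : Prop :=
  forall p : R * R, continuous (fun z : R * R => f (fst z) (snd z)) p.

Definition Tf (q0 th x t : R) : R :=
  (exp (2 * q0 * x * sin th) - exp (2 * q0 ^ 2 * t * sin (2 * th))) /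
  (exp (2 * q0 * x * sin th) + exp (2 * q0 ^ 2 * t * sin (2 * th))).

Inductive ex := K (r : R) | VT | VC | VS | Pl (a b : ex) | Mu (a b : ex).

Fixpoint ev q0 th e x t : R :=
  match e with
  | K r => r | VT => Tf q0 th x t | VC => cos (2 * q0 ^ 2 * t) | VS => sin (2 * q0 ^ 2 * t)
  | Pl a b => ev q0 th a x t + ev q0 th b x t
  | Mu a b => ev q0 th a x t * ev q0 th b x t end.

Lemma cP (f g : R * R -> R) p : continuous f p -> continuous g p ->
  continuous (fun z => f z + g z) p.
Proof. intros; apply (continuous_plus f g); auto. Qed.
Lemma cM (f g : R * R -> R) p : continuous f p -> continuous g p ->
  continuous (fun z => f z * g z) p.
Proof. intros; apply (continuous_mult f g); auto. Qed.
Lemma cFst (f : R -> R) p : (forall x, continuous f x) ->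
  continuous (fun z : R * R => f (fst z)) p.
Proof. intros H; destruct p; apply (continuous_comp fst f); [apply continuous_fst|apply H]. Qed.
Lemma cSnd (f : R -> R) p : (forall x, continuous f x) ->
  continuous (fun z : R * R => f (snd z)) p.
Proof. intros H; destruct p; apply (continuous_comp snd f); [apply continuous_snd|apply H]. Qed.
Lemma cInv (f : R * R -> R) p : continuous f p -> f p <> 0 ->
  continuous (fun z => / f z) p.
Proof. intros; apply (continuous_comp f Rinv); auto. apply continuous_Rinv; auto. Qed.

Lemma c1 (f : R -> R) (x : R) : ex_derive f x -> continuous f x.
Proof. intros H; apply (@ex_derive_continuous R_AbsRing R_NormedModule); exact H. Qed.

Lemma ev_cont q0 th e : Cont (ev q0 th e).
Proof.
  intros p; induction e; simpl.
  - apply continuous_const.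
  - unfold Tf, Rdiv. apply cM.
    + apply cP. apply (cFst (fun x => exp (2 * q0 * x * sin th))).
      intros; apply c1; auto_derive; auto.
      apply (cSnd (fun x => - exp (2 * q0 ^ 2 * x * sin (2 * th)))).
      intros; apply c1; auto_derive; auto.
    + apply cInv.
      * apply cP. apply (cFst (fun x => exp (2 * q0 * x * sin th))).
        intros; apply c1; auto_derive; auto.
        apply (cSnd (fun x => exp (2 * q0 ^ 2 * x * sin (2 * th)))).
        intros; apply c1; auto_derive; auto.
      * apply Rgt_not_eq. apply Rplus_lt_0_compat; apply exp_pos.
  - apply (cSnd (fun x => cos (2 * q0 ^ 2 * x))).
    intros; apply c1; auto_derive; auto.
  - apply (cSnd (fun x => sin (2 * q0 ^ 2 * x))).
    intros; apply c1; auto_derive; auto.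
  - apply cP; auto.
  - apply cM; auto.
Qed.

Definition oneT := Pl (K 1) (Mu (K (-1)) (Mu VT VT)).
Fixpoint dx q0 th e : ex :=
  match e with
  | K _ | VC | VS => K 0
  | VT => Mu (K (q0 * sin th)) oneT
  | Pl a b => Pl (dx q0 th a) (dx q0 th b)
  | Mu a b => Pl (Mu (dx q0 th a) b) (Mu a (dx q0 th b)) end.
Fixpoint dt q0 th e : ex :=
  match e with
  | K _ => K 0
  | VT => Mu (K (- (q0 ^ 2 * sin (2 * th)))) oneT
  | VC => Mu (K (- (2 * q0 ^ 2))) VS
  | VS => Mu (K (2 * q0 ^ 2)) VC
  | Pl a b => Pl (dt q0 th a) (dt q0 th b)
  | Mu a b => Pl (Mu (dt q0 th a) b) (Mu a (dt q0 th b)) end.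

Lemma ev_dx q0 th e x t :
  derivable_pt_lim (fun y => ev q0 th e y t) x (ev q0 th (dx q0 th e) x t).
Proof.
  induction e; simpl.
  - apply derivable_pt_lim_const.
  - apply is_derive_Reals. unfold Tf. auto_derive.
    + apply Rgt_not_eq. apply Rplus_lt_0_compat; apply exp_pos.
    + replace (q0 * (q0 * 1)) with (q0 ^ 2) by ring.
      assert (0 < exp (2 * q0 * x * sin th) + exp (2 * q0 ^ 2 * t * sin (2 * th))) by (apply Rplus_lt_0_compat; apply exp_pos).
      field. lra.
  - apply derivable_pt_lim_const.
  - apply derivable_pt_lim_const.
  - apply (derivable_pt_lim_plus (fun y => ev q0 th e1 y t) (fun y => ev q0 th e2 y t)); auto.
  - replace (ev q0 th (dx q0 th e1) x t * ev q0 th e2 x t + ev q0 th e1 x t * ev q0 th (dx q0 th e2) x t)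
      with (ev q0 th (dx q0 th e1) x t * (fun y => ev q0 th e2 y t) x + (fun y => ev q0 th e1 y t) x * ev q0 th (dx q0 th e2) x t) by reflexivity.
    apply (derivable_pt_lim_mult (fun y => ev q0 th e1 y t) (fun y => ev q0 th e2 y t)); auto.
Qed.

Lemma ev_dt q0 th e x t :
  derivable_pt_lim (fun s => ev q0 th e x s) t (ev q0 th (dt q0 th e) x t).
Proof.
  induction e; simpl.
  - apply derivable_pt_lim_const.
  - apply is_derive_Reals. unfold Tf. auto_derive.
    + apply Rgt_not_eq. apply Rplus_lt_0_compat; apply exp_pos.
    + replace (q0 * (q0 * 1)) with (q0 ^ 2) by ring.
      assert (0 < exp (2 * q0 * x * sin th) + exp (2 * q0 ^ 2 * t * sin (2 * th))) by (apply Rplus_lt_0_compat; apply exp_pos).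
      field. lra.
  - apply is_derive_Reals. auto_derive; auto. ring.
  - apply is_derive_Reals. auto_derive; auto. ring.
  - apply (derivable_pt_lim_plus (fun y => ev q0 th e1 x y) (fun y => ev q0 th e2 x y)); auto.
  - replace (ev q0 th (dt q0 th e1) x t * ev q0 th e2 x t + ev q0 th e1 x t * ev q0 th (dt q0 th e2) x t)
      with (ev q0 th (dt q0 th e1) x t * (fun y => ev q0 th e2 x y) t + (fun y => ev q0 th e1 x y) t * ev q0 th (dt q0 th e2) x t) by reflexivity.
    apply (derivable_pt_lim_mult (fun y => ev q0 th e1 x y) (fun y => ev q0 th e2 x y)); auto.
Qed.

Lemma Cont_cont2 f : Cont f -> cont2 f.
Proof.
  intros H x t eps Heps.
  specialize (H (x, t) (fun y => Rabs (y - f x t) < eps)).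
  destruct H as [d Hd].
  - exists (mkposreal eps Heps). intros y Hy. exact Hy.
  - exists d. split; [apply cond_pos|].
    intros y s H1 H2. apply (Hd (y, s)). split; assumption.
Qed.

Lemma ev_smooth q0 th e : smooth2 (ev q0 th e).
Proof.
  intros l. revert e. induction l as [|d l IH]; intros e; simpl.
  - split; [apply Cont_cont2, ev_cont | exact I].
  - split; [apply Cont_cont2, ev_cont |].
    destruct d.
    + exists (ev q0 th (dx q0 th e)). split; [intros; apply ev_dx | apply IH].
    + exists (ev q0 th (dt q0 th e)). split; [intros; apply ev_dt | apply IH].
Qed.

From Stdlib Require Import FunctionalExtensionality.

Definition eRe q0 th := Mu (K q0) (Pl (Mu VC (K (cos th))) (Mu (K (-1)) (Mu VS (Mu (K (sin th)) VT)))).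
Definition eIm q0 th := Mu (K q0) (Pl (Mu VS (K (cos th))) (Mu VC (Mu (K (sin th)) VT))).

Lemma qsol_eq q0 th : qsol q0 th = fun x t => mkC (ev q0 th (eRe q0 th) x t) (ev q0 th (eIm q0 th) x t).
Proof.
  apply functional_extensionality; intros x; apply functional_extensionality; intros t.
  unfold qsol, eRe, eIm; unfold Cdiv, Cmul, Cadd, Cinv, Cexp, RtoC; cbn [Re Im ev].
  rewrite exp_0, cos_neg, sin_neg. unfold Tf.
  assert (0 < exp (2 * q0 * x * sin th) + exp (2 * q0 ^ 2 * t * sin (2 * th))) by (apply Rplus_lt_0_compat; apply exp_pos).
  assert (0 < (exp (2 * q0 * x * sin th) + exp (2 * q0 ^ 2 * t * sin (2 * th))) ^ 2 + 0 ^ 2) by nra.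
  f_equal; field; lra.
Qed.

Lemma Tf_neg q0 th x t : Tf q0 th (- x) (- t) = - Tf q0 th x t.
Proof.
  unfold Tf.
  replace (2 * q0 * - x * sin th) with (- (2 * q0 * x * sin th)) by ring.
  replace (2 * q0 ^ 2 * - t * sin (2 * th)) with (- (2 * q0 ^ 2 * t * sin (2 * th))) by ring.
  rewrite !exp_Ropp.
  assert (0 < exp (2 * q0 * x * sin th)) by apply exp_pos.
  assert (0 < exp (2 * q0 ^ 2 * t * sin (2 * th))) by apply exp_pos.
  field; split; lra.
Qed.

Lemma cosn q0 t : cos (2 * q0 ^ 2 * - t) = cos (2 * q0 ^ 2 * t).
Proof. replace (2 * q0 ^ 2 * - t) with (- (2 * q0 ^ 2 * t)) by ring. apply cos_neg. Qed.
Lemma sinn q0 t : sin (2 * q0 ^ 2 * - t) = - sin (2 * q0 ^ 2 * t).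
Proof. replace (2 * q0 ^ 2 * - t) with (- (2 * q0 ^ 2 * t)) by ring. apply sin_neg. Qed.

Lemma key a b k1 k2 u v : u = 0 -> v = 0 -> a - b = k1 * u + k2 * v -> a = b.
Proof. intros -> -> H. lra. Qed.

Lemma pde q0 th x t :
  let qt := fun x t => mkC (ev q0 th (dt q0 th (eRe q0 th)) x t) (ev q0 th (dt q0 th (eIm q0 th)) x t) in
  let qxx := fun x t => mkC (ev q0 th (dx q0 th (dx q0 th (eRe q0 th))) x t) (ev q0 th (dx q0 th (dx q0 th (eIm q0 th))) x t) in
  let Q := fun x t => mkC (ev q0 th (eRe q0 th) x t) (ev q0 th (eIm q0 th) x t) in
  Cmul Ci (qt x t) = Csub (qxx x t) (Cmul (RtoC 2) (Cmul (Cmul (Q x t) (Q x t)) (Q (- x) (- t)))).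
Proof.
  intros qt qxx Q. subst qt qxx Q.
  unfold Cmul, Csub, RtoC, Ci, eRe, eIm; cbn [ev dx dt oneT Re Im].
  rewrite Tf_neg, cosn, sinn, sin_2a.
  set (T := Tf q0 th x t). set (cw := cos (2 * q0 ^ 2 * t)). set (sw := sin (2 * q0 ^ 2 * t)).
  set (c := cos th). set (s := sin th).
  assert (hc : c ^ 2 + s ^ 2 - 1 = 0) by (subst c s; rewrite <- (sin2_cos2 th); unfold Rsqr; ring).
  assert (hw : cw ^ 2 + sw ^ 2 - 1 = 0) by (subst cw sw; rewrite <- (sin2_cos2 (2 * q0 ^ 2 * t)); unfold Rsqr; ring).
  f_equal.
  - apply (key _ _ (2 * q0 ^ 3 * (cw * c - sw * s * T)) (2 * q0 ^ 3 * (cw * c - sw * s * T) * (c ^ 2 + s ^ 2 * T ^ 2)) _ _ hc hw). ring.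
  - apply (key _ _ (2 * q0 ^ 3 * (sw * c + cw * s * T)) (2 * q0 ^ 3 * (sw * c + cw * s * T) * (c ^ 2 + s ^ 2 * T ^ 2)) _ _ hc hw). ring.
Qed.

Lemma key1 a b k v : v = 0 -> a - b = k * v -> a = b.
Proof. intros -> H. lra. Qed.

Lemma lim_p q0 th t : 0 < q0 -> 0 < sin th ->
  Clim_pinf (fun x => mkC (ev q0 th (eRe q0 th) x t) (ev q0 th (eIm q0 th) x t))
    (Cmul (RtoC q0) (Cexp (mkC 0 (2 * q0 ^ 2 * t + th)))).
Proof.
  intros hq hs eps He.
  set (B := 2 * q0 ^ 2 * t * sin (2 * th)).
  assert (hqs : 0 < 2 * q0 * sin th) by nra.
  assert (hr : 0 < eps / (2 * q0 * sin th)) by (apply Rdiv_lt_0_compat; lra).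
  exists ((B - ln (eps / (2 * q0 * sin th))) / (2 * q0 * sin th)).
  intros x Hx.
  assert (Hx' : B - ln (eps / (2 * q0 * sin th)) < 2 * q0 * x * sin th).
  { apply (Rmult_lt_compat_r (2 * q0 * sin th)) in Hx; auto.
    unfold Rdiv in Hx. rewrite Rmult_assoc, Rinv_l in Hx; lra. }
  unfold Cmod, Csub, Cmul, Cexp, RtoC, eRe, eIm; cbn [Defs.Re Defs.Im ev].
  rewrite exp_0, cos_plus, sin_plus.
  set (T := Tf q0 th x t). set (cw := cos (2 * q0 ^ 2 * t)). set (sw := sin (2 * q0 ^ 2 * t)).
  set (c := cos th). set (s := sin th).
  assert (hw : cw ^ 2 + sw ^ 2 - 1 = 0) by (subst cw sw; rewrite <- (sin2_cos2 (2 * q0 ^ 2 * t)); unfold Rsqr; ring).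
  match goal with |- sqrt ?u < _ => assert (Hu : u = (q0 * s * (1 - T)) ^ 2) end.
  { apply (key1 _ _ ((q0 * s * (1 - T)) ^ 2) _ hw). ring. }
  rewrite Hu.
  set (E1 := exp (2 * q0 * x * sin th)). set (E2 := exp B).
  assert (h1 : 0 < E1) by apply exp_pos. assert (h2 : 0 < E2) by apply exp_pos.
  assert (HT : 1 - T = 2 * E2 / (E1 + E2)) by (unfold T, Tf; fold B; fold E1 E2; field; lra).
  assert (HT0 : 0 <= 1 - T) by (rewrite HT; apply Rlt_le, Rdiv_lt_0_compat; lra).
  rewrite sqrt_pow2 by (apply Rmult_le_pos; [fold s in hqs; nra | exact HT0]).
  assert (HE : E2 / E1 < eps / (2 * q0 * sin th)).
  { unfold E1, E2. rewrite <- (exp_ln (eps / (2 * q0 * sin th))) by exact hr.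
    unfold Rdiv at 1. rewrite <- exp_Ropp, <- exp_plus. apply exp_increasing. lra. }
  assert (HT1 : 1 - T <= 2 * (E2 / E1)).
  { rewrite HT. unfold Rdiv. rewrite Rmult_assoc. apply Rmult_le_compat_l; [lra|].
    apply Rmult_le_compat_l; [lra|]. apply Rinv_le_contravar; lra. }
  fold s in HE, hqs.
  assert (q0 * s * (1 - T) <= q0 * s * (2 * (E2 / E1))) by (apply Rmult_le_compat_l; unfold s; nra).
  assert (q0 * s * (2 * (E2 / E1)) < q0 * s * (2 * (eps / (2 * q0 * s)))) by (apply Rmult_lt_compat_l; unfold s in *; nra).
  replace (q0 * s * (2 * (eps / (2 * q0 * s)))) with eps in * by (field; unfold s; split; lra).
  lra.
Qed.

Lemma lim_m q0 th t : 0 < q0 -> 0 < sin th ->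
  Clim_minf (fun x => mkC (ev q0 th (eRe q0 th) x t) (ev q0 th (eIm q0 th) x t))
    (Cmul (RtoC q0) (Cexp (mkC 0 (2 * q0 ^ 2 * t - th)))).
Proof.
  intros hq hs eps He.
  set (B := 2 * q0 ^ 2 * t * sin (2 * th)).
  assert (hqs : 0 < 2 * q0 * sin th) by nra.
  assert (hr : 0 < eps / (2 * q0 * sin th)) by (apply Rdiv_lt_0_compat; lra).
  exists ((B + ln (eps / (2 * q0 * sin th))) / (2 * q0 * sin th)).
  intros x Hx.
  assert (Hx' : 2 * q0 * x * sin th < B + ln (eps / (2 * q0 * sin th))).
  { assert (E : B + ln (eps / (2 * q0 * sin th)) = ((B + ln (eps / (2 * q0 * sin th))) / (2 * q0 * sin th)) * (2 * q0 * sin th)) by (field; lra).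
    rewrite E. replace (2 * q0 * x * sin th) with (x * (2 * q0 * sin th)) by ring.
    apply Rmult_lt_compat_r; auto. }
  unfold Cmod, Csub, Cmul, Cexp, RtoC, eRe, eIm; cbn [Defs.Re Defs.Im ev].
  rewrite exp_0, cos_minus, sin_minus.
  set (T := Tf q0 th x t). set (cw := cos (2 * q0 ^ 2 * t)). set (sw := sin (2 * q0 ^ 2 * t)).
  set (c := cos th). set (s := sin th).
  assert (hw : cw ^ 2 + sw ^ 2 - 1 = 0) by (subst cw sw; rewrite <- (sin2_cos2 (2 * q0 ^ 2 * t)); unfold Rsqr; ring).
  match goal with |- sqrt ?u < _ => assert (Hu : u = (q0 * s * (1 + T)) ^ 2) end.
  { apply (key1 _ _ ((q0 * s * (1 + T)) ^ 2) _ hw). ring. }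
  rewrite Hu.
  set (E1 := exp (2 * q0 * x * sin th)). set (E2 := exp B).
  assert (h1 : 0 < E1) by apply exp_pos. assert (h2 : 0 < E2) by apply exp_pos.
  assert (HT : 1 + T = 2 * E1 / (E1 + E2)) by (unfold T, Tf; fold B; fold E1 E2; field; lra).
  assert (HT0 : 0 <= 1 + T) by (rewrite HT; apply Rlt_le, Rdiv_lt_0_compat; lra).
  rewrite sqrt_pow2 by (apply Rmult_le_pos; [fold s in hqs; nra | exact HT0]).
  assert (HE : E1 / E2 < eps / (2 * q0 * sin th)).
  { unfold E1, E2. rewrite <- (exp_ln (eps / (2 * q0 * sin th))) by exact hr.
    unfold Rdiv at 1. rewrite <- exp_Ropp, <- exp_plus. apply exp_increasing. lra. }
  assert (HT1 : 1 + T <= 2 * (E1 / E2)).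
  { rewrite HT. unfold Rdiv. rewrite Rmult_assoc. apply Rmult_le_compat_l; [lra|].
    apply Rmult_le_compat_l; [lra|]. apply Rinv_le_contravar; lra. }
  fold s in HE, hqs.
  assert (q0 * s * (1 + T) <= q0 * s * (2 * (E1 / E2))) by (apply Rmult_le_compat_l; [unfold s; nra | exact HT1]).
  assert (q0 * s * (2 * (E1 / E2)) < q0 * s * (2 * (eps / (2 * q0 * s)))) by (apply Rmult_lt_compat_l; unfold s in *; nra).
  replace (q0 * s * (2 * (eps / (2 * q0 * s)))) with eps in * by (field; unfold s; split; lra).
  lra.
Qed.

Theorem mainTheorem11 (q0 th : R) (hq0 : 0 < q0) (hth1 : 0 < th) (hth2 : th < PI) :
  Csmooth2 (qsol q0 th) /\
  (exists qt qx qxx : R -> R -> Cx,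
     Cpartial_t (qsol q0 th) qt /\ Cpartial_x (qsol q0 th) qx /\ Cpartial_x qx qxx /\
     forall x t,
       Cmul Ci (qt x t) =
       Csub (qxx x t)
            (Cmul (RtoC 2) (Cmul (Cmul (qsol q0 th x t) (qsol q0 th x t))
                                 (qsol q0 th (- x) (- t))))) /\
  (forall t, Clim_pinf (fun x => qsol q0 th x t)
                       (Cmul (RtoC q0) (Cexp (mkC 0 (2 * q0 ^ 2 * t + th))))) /\
  (forall t, Clim_minf (fun x => qsol q0 th x t)
                       (Cmul (RtoC q0) (Cexp (mkC 0 (2 * q0 ^ 2 * t - th))))).
Proof.
  assert (hs : 0 < sin th) by (apply sin_gt_0; auto).
  rewrite qsol_eq.
  split; [|split; [|split]].
  - split; cbn [Defs.Re Defs.Im]; apply ev_smooth.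
  - exists (fun x t => mkC (ev q0 th (dt q0 th (eRe q0 th)) x t) (ev q0 th (dt q0 th (eIm q0 th)) x t)).
    exists (fun x t => mkC (ev q0 th (dx q0 th (eRe q0 th)) x t) (ev q0 th (dx q0 th (eIm q0 th)) x t)).
    exists (fun x t => mkC (ev q0 th (dx q0 th (dx q0 th (eRe q0 th))) x t) (ev q0 th (dx q0 th (dx q0 th (eIm q0 th))) x t)).
    split; [|split; [|split]].
    + intros x t; cbn [Defs.Re Defs.Im]; split; apply ev_dt.
    + intros x t; cbn [Defs.Re Defs.Im]; split; apply ev_dx.
    + intros x t; cbn [Defs.Re Defs.Im]; split; apply ev_dx.
    + intros x t. apply pde.
  - intros t; apply lim_p; auto.
  - intros t; apply lim_m; auto.
Qed.
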